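(* Let $I\subseteq\mathfrak{M}$ be an ideal of $P$, let $Z=\{z_1,\dots,z_s\}$ be a set of $s\ge 1$ distinct indeterminates in $X$, and let $\sigma$ be a $Z$-separating term ordering for $I$. (a) The reduced $\sigma$-Gröbner basis of $I$ is a $Z$-separating $\sigma$-Gröbner basis of $I$. (b) Let $\{\frac1{c_1}f_1,\dots,\frac1{c_s}f_s,g_1,\dots,g_t\}$ be a $Z$-separating $\sigma$-Gröbner basis of $I$, and for $i=1,\dots,s$ let $h_i=\mathrm{NF}_{\hat\sigma,I\cap\widehat P}(\mathrm{tail}_{z_i}(f_i))$. Then the reduced $\sigma$-Gröbner basis of $I$ is $\{z_1-h_1,\dots,z_s-h_s,g_1,\dots,g_t\}$.
   Context: $K$ is a field, $P=K[x_1,\dots,x_n]$, $X=\{x_1,\dots,x_n\}$, $\mathfrak{M}=\langle x_1,\dots,x_n\rangle$, $\widehat P=K[X\setminus Z]$, $\hat\sigma$ the restriction of $\sigma$ to $\widehat P$, and $\mathrm{NF}_{\hat\sigma,J}(h)$ the normal form of $h$ modulo an ideal $J$ of $\widehat P$ with respect to $\hat\sigma$. For $f\in P$, $\mathrm{indets}(f)$ is the set of indeterminates dividing some term in the support of $f$. For $f\in\mathfrak{M}$ with nonzero degree-one part $\mathrm{Lin}_{\mathfrak{M}}(f)$, $z\in\mathrm{indets}(\mathrm{Lin}_{\mathfrak M}(f))$, and $c\neq 0$ the coefficient of $z$ in $f$, set $\mathrm{tail}_z(f)=z-\frac1cf$; $f$ is $z$-separating if $z\notin\mathrm{indets}(\mathrm{tail}_z(f))$.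 A tuple $(f_1,\dots,f_s)$ of nonzero elements of $\mathfrak M$ is coherently $Z$-separating if each $f_i$ is $z_i$-separating and $z_i\notin\mathrm{indets}(f_j)$ for $j\ne i$. A term ordering $\sigma$ is a $Z$-separating term ordering for $I$ if there are $f_1,\dots,f_s\in I\setminus\{0\}$ with $z_i=\mathrm{LT}_\sigma(f_i)$ and $(f_1,\dots,f_s)$ coherently $Z$-separating. For such $\sigma$, a $Z$-separating $\sigma$-Gröbner basis of $I$ is a $\sigma$-Gröbner basis of the form $\{\frac1{c_1}f_1,\dots,\frac1{c_s}f_s,g_1,\dots,g_t\}$ with $(f_1,\dots,f_s)$ coherently $Z$-separating, $c_i=\mathrm{LC}_\sigma(f_i)$, $z_i=\mathrm{LT}_\sigma(f_i)$, and $\{g_1,\dots,g_t\}$ the reduced $\hat\sigma$-Gröbner basis of $I\cap\widehat P$. *)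

(* Defs.v *)
From HB Require Import structures.
From mathcomp Require Import all_boot all_order all_algebra.
From mathcomp Require Import mpoly.
Set Implicit Arguments. Unset Strict Implicit. Unset Printing Implicit Defensive.
Import GRing.Theory.
Local Open Scope ring_scope.

Section Defs.
Variables (K : fieldType) (n : nat).
Local Notation P := {mpoly K[n]}.

Definition term_order (le : rel 'X_{1..n}) : Prop :=
  [/\ reflexive le, antisymmetric le, transitive le, total le &
      (forall m, le 0%MM m) /\
      (forall m1 m2 m, le m1 m2 -> le (m1 + m)%MM (m2 + m)%MM)].

(* LT_sigma(f): the le-largest term of the support of f (0 if f = 0). *)
Definition mLT (le : rel 'X_{1..n}) (f : P) : 'X_{1..n} :=
  foldl (fun acc m => if le acc m then m else acc)
        (head 0%MM (msupp f)) (msupp f).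

Definition mLC (le : rel 'X_{1..n}) (f : P) : K := f@_(mLT le f).

Definition is_ideal (I : P -> Prop) : Prop :=
  [/\ I 0, (forall f g, I f -> I g -> I (f + g)) & (forall f g, I g -> I (f * g))].

Definition in_M (f : P) : Prop :=
  exists a : 'I_n -> P, f = \sum_(i < n) a i * 'X_i.

Definition in_indets (j : 'I_n) (f : P) : bool :=
  has (fun m : 'X_{1..n} => (0 < m j)%N) (msupp f).

Definition Lin (f : P) : P :=
  \sum_(m <- msupp f | mdeg m == 1%N) f@_m *: 'X_[m].

Definition tail (j : 'I_n) (f : P) : P := 'X_j - (f@_(U_(j)%MM))^-1 *: f.

Definition z_separating (j : 'I_n) (f : P) : Prop :=
  [/\ in_M f, Lin f != 0, in_indets j (Lin f) & ~~ in_indets j (tail j f)].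

Definition coh_Z_separating s (z : 'I_s -> 'I_n) (f : 'I_s -> P) : Prop :=
  forall i, [/\ f i != 0, z_separating (z i) (f i) &
                forall j, j != i -> ~~ in_indets (z i) (f j)].

Definition Z_separating_order s (le : rel 'X_{1..n}) (I : P -> Prop)
    (z : 'I_s -> 'I_n) : Prop :=
  exists f : 'I_s -> P,
    [/\ forall i, I (f i), forall i, mLT le (f i) = U_(z i)%MM
      & coh_Z_separating z f].

(* P^ = K[X \ Z] viewed inside P: polynomials with no indeterminate in Z *)
Definition in_Phat s (z : 'I_s -> 'I_n) (f : P) : Prop :=
  forall i, ~~ in_indets (z i) f.

Definition Ihat s (I : P -> Prop) (z : 'I_s -> 'I_n) : P -> Prop :=
  fun f => I f /\ in_Phat z f.

Definition is_GB (le : rel 'X_{1..n}) (J : P -> Prop) (G : seq P) : Prop :=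
  (forall g, g \in G -> J g /\ g != 0) /\
  (forall f, J f -> f != 0 -> exists2 g, g \in G & (mLT le g <= mLT le f)%MM).

Definition is_reduced_GB (le : rel 'X_{1..n}) (J : P -> Prop) (G : seq P) : Prop :=
  [/\ is_GB le J G,
      (forall g, g \in G -> mLC le g = 1) &
      (forall g g', g \in G -> g' \in G -> g' != g ->
         forall m, m \in msupp g -> ~~ (mLT le g' <= m)%MM)].

Definition is_NF (le : rel 'X_{1..n}) (J : P -> Prop) (h r : P) : Prop :=
  J (h - r) /\
  forall m, m \in msupp r ->
    ~ (exists f, [/\ J f, f != 0 & (mLT le f <= m)%MM]).

Definition ZGB_seq s (le : rel 'X_{1..n}) (f : 'I_s -> P) (gs : seq P) : seq P :=
  [seq (mLC le (f i))^-1 *: f i | i <- enum 'I_s] ++ gs.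

Definition Z_separating_GB_data s (le : rel 'X_{1..n}) (I : P -> Prop)
    (z : 'I_s -> 'I_n) (f : 'I_s -> P) (gs : seq P) : Prop :=
  [/\ coh_Z_separating z f,
      forall i, mLT le (f i) = U_(z i)%MM,
      is_reduced_GB le (Ihat I z) gs &
      is_GB le I (ZGB_seq le f gs)].

Definition Z_separating_GB s (le : rel 'X_{1..n}) (I : P -> Prop)
    (z : 'I_s -> 'I_n) (G : seq P) : Prop :=
  exists f gs, Z_separating_GB_data le I z f gs /\ G =i ZGB_seq le f gs.

End Defs.

(* Main.v *)
Require Import Defs.
From HB Require Import structures.
From mathcomp Require Import all_boot all_order all_algebra.
From mathcomp Require Import mpoly.
Set Implicit Arguments. Unset Strict Implicit. Unset Printing Implicit Defensive.
Import GRing.Theory.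
Local Open Scope ring_scope.
Section Aux.
Context (K : fieldType) (n : nat) (le : rel 'X_{1..n}).
Hypothesis Hle : term_order le.
Local Notation P := {mpoly K[n]}.

Lemma tle_refl m : le m m. Proof. by case: Hle. Qed.
Lemma tle_anti m1 m2 : le m1 m2 -> le m2 m1 -> m1 = m2.
Proof. by case: Hle => _ A _ _ _ H1 H2; apply: A; rewrite H1 H2. Qed.
Lemma tle_trans m2 m1 m3 : le m1 m2 -> le m2 m3 -> le m1 m3.
Proof. by case: Hle => _ _ T _ _; apply: T. Qed.
Lemma tle_total m1 m2 : le m1 m2 || le m2 m1.
Proof. by case: Hle => _ _ _ T _; apply: T. Qed.
Lemma tle_div m1 m2 : (m1 <= m2)%MM -> le m1 m2.
Proof.
case: Hle => _ _ _ _ [H0 HD] Hd.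
have := HD 0%MM (m2 - m1)%MM m1 (H0 _).
by rewrite add0m submK.
Qed.

Lemma foldl_max (s : seq 'X_{1..n}) acc :
  let r := foldl (fun acc m => if le acc m then m else acc) acc s in
  r \in acc :: s /\ forall x, x \in acc :: s -> le x r.
Proof.
elim: s acc => [|a s IH] acc /=.
  split; first by rewrite mem_seq1.
  move=> x; rewrite mem_seq1 => Hx.
  have -> : x = acc by apply/eqP.
  exact: tle_refl.
case h: (le acc a) => /=.
  have [IH1 IH2] := IH a.
  split; first by move: IH1; rewrite !inE => /orP [->|->]; rewrite ?orbT.
  move=> x; rewrite !inE => /or3P [/eqP->|/eqP->|xs].
  - by apply: (tle_trans h); apply: IH2; rewrite inE eqxx.
  - by apply: IH2; rewrite inE eqxx.
  - by apply: IH2; rewrite inE xs orbT.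
have [IH1 IH2] := IH acc.
split; first by move: IH1; rewrite !inE => /orP [->|->]; rewrite ?orbT.
move=> x; rewrite !inE => /or3P [/eqP->|/eqP->|xs].
- by apply: IH2; rewrite inE eqxx.
- have h3 : le acc (foldl (fun acc m => if le acc m then m else acc) acc s) by apply: IH2; rewrite inE eqxx.
  have := tle_total a acc; rewrite h orbF => h2.
  exact: tle_trans h2 h3.
- by apply: IH2; rewrite inE xs orbT.
Qed.

Lemma mLT_in (f : P) : f != 0 -> mLT le f \in msupp f.
Proof.
rewrite -msupp_eq0 /mLT; case E: (msupp f) => [|a s] //= _.
have [H _] := foldl_max (a :: s) a.
by move: H; rewrite /= !inE orbA orbb.
Qed.

Lemma mLT_max (f : P) m : m \in msupp f -> le m (mLT le f).
Proof.
rewrite /mLT; case E: (msupp f) => [|a s] //= Hm.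
have [_ H] := foldl_max (a :: s) a; apply: H.
by rewrite inE Hm orbT.
Qed.

Lemma mLT0 : mLT le (0 : P) = 0%MM.
Proof. by rewrite /mLT msupp0. Qed.

Lemma mLT_eq (f : P) m : m \in msupp f -> (forall m', m' \in msupp f -> le m' m) ->
  mLT le f = m.
Proof.
move=> Hm H; have f0 : f != 0 by rewrite -msupp_eq0; case: (msupp f) Hm.
apply: tle_anti; [exact: H (mLT_in f0)| exact: mLT_max].
Qed.
End Aux.

Section Aux2.
Context (K : fieldType) (n : nat).
Local Notation P := {mpoly K[n]}.

Lemma inM0 (f : P) : in_M f -> f@_0%MM = 0.
Proof.
case=> a ->; rewrite raddf_sum big1 // => i _.
apply: memN_msupp_eq0; rewrite (perm_mem (msuppMX _ _)).
apply/mapP => -[m' _ /eqP]; apply/negP.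
rewrite eq_sym; apply/negP => /eqP /mnmP /(_ i).
by rewrite mnmDE mnm0E mnm1E eqxx.
Qed.

Lemma divU m (j : 'I_n) : (m <= U_(j))%MM -> m = 0%MM \/ m = U_(j)%MM.
Proof.
move/mnm_lepP => H.
case E: (m j) => [|k].
  left; apply/mnmP => i; rewrite mnm0E; have := H i; rewrite mnm1E.
  by case: eqP => [<-|_]; rewrite ?E //; case: (m i).
right; apply/mnmP => i; have := H i; rewrite mnm1E.
case: eqP => [<-|_]; last by case: (m i).
by rewrite E; case: k E.
Qed.

Lemma indets_term (f : P) m (j : 'I_n) :
  m \in msupp f -> (U_(j) <= m)%MM -> in_indets j f.
Proof.
move=> Hm; rewrite lep1mP => Hj; apply/hasP; exists m => //.
by rewrite lt0n.
Qed.

Lemma Nindets_term (f : P) m (j : 'I_n) :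
  ~~ in_indets j f -> m \in msupp f -> ~~ (U_(j) <= m)%MM.
Proof. by move=> H Hm; apply: contra H; apply: indets_term. Qed.

Lemma indets_sub (j : 'I_n) (f g : P) :
  ~~ in_indets j f -> ~~ in_indets j g -> ~~ in_indets j (f - g).
Proof.
move=> Hf Hg; apply/hasPn => m /msuppB_le; rewrite mem_cat => /orP [] Hm.
  by move/hasPn: Hf => /(_ m Hm).
by move/hasPn: Hg => /(_ m Hm).
Qed.

Lemma indets_X (i j : 'I_n) : i != j -> ~~ in_indets j ('X_i : P).
Proof.
move=> ij; apply/hasPn => m; rewrite msuppX mem_seq1 => /eqP ->.
by rewrite mnm1E (negbTE ij).
Qed.

Lemma indets_coef (j : 'I_n) (f : P) : ~~ in_indets j f -> f@_U_(j) = 0.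
Proof.
move=> H; apply: memN_msupp_eq0; apply/negP => Hm.
by move/hasPn: H => /(_ _ Hm); rewrite mnm1E eqxx.
Qed.

End Aux2.

Section Aux3.
Context (K : fieldType) (n : nat) (le : rel 'X_{1..n}).
Hypothesis Hle : term_order le.
Local Notation P := {mpoly K[n]}.

Lemma NF_bound (J : P -> Prop) (t h : P) B :
  is_NF le J t h -> (forall m, m \in msupp t -> le m B) ->
  forall m, m \in msupp h -> le m B.
Proof.
move=> [HJ HN] Ht m Hm.
case: (boolP (le m B)) => // Hn; exfalso.
have h0 : h != 0 by rewrite -msupp_eq0; case: (msupp h) Hm.
set L := mLT le h.
have HL := mLT_in Hle h0.
have HLn : ~~ le L B.
  by apply: contra Hn => H; apply: (tle_trans Hle (mLT_max Hle Hm)).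
have HBL : le B L by have := tle_total Hle L B; rewrite (negbTE HLn).
have Lt : L \notin msupp t by apply: contra HLn; apply: Ht.
have HL2 : L \in msupp (t - h).
  by rewrite mcoeff_msupp mcoeffB (memN_msupp_eq0 Lt) sub0r oppr_eq0 -mcoeff_msupp.
have E : mLT le (t - h) = L.
  apply: (mLT_eq Hle) => // m' /msuppB_le; rewrite mem_cat => /orP [] Hm'.
    exact: (tle_trans Hle (Ht _ Hm') HBL).
  exact: (mLT_max Hle).
apply: (HN L HL); exists (t - h); split => //.
  by rewrite -msupp_eq0; case: (msupp (t - h)) HL2.
by rewrite E lepm_refl.
Qed.

Lemma LT_Xsub (j : 'I_n) (h : P) :
  ~~ in_indets j h -> (forall m, m \in msupp h -> le m U_(j)%MM) ->
  mLT le ('X_j - h) = U_(j)%MM /\ mLC le ('X_j - h) = 1.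
Proof.
move=> Hj Hb.
have C : ('X_j - h)@_U_(j) = 1 by rewrite mcoeffB mcoeffXU eqxx indets_coef // subr0.
have E : mLT le ('X_j - h) = U_(j)%MM.
  apply: (mLT_eq Hle); first by rewrite mcoeff_msupp C oner_neq0.
  move=> m' /msuppB_le; rewrite mem_cat => /orP [].
    by rewrite msuppX mem_seq1 => /eqP ->; apply: (tle_refl Hle).
  exact: Hb.
by split => //; rewrite /mLC E.
Qed.

Lemma mLTZ (c : K) (f : P) : c != 0 -> mLT le (c *: f) = mLT le f.
Proof.
move=> c0; have Hp := perm_mem (msuppZ f c0).
case: (eqVneq f 0) => [->|f0]; first by rewrite scaler0.
apply: (mLT_eq Hle); first by rewrite Hp; apply: (mLT_in Hle).
by move=> m'; rewrite Hp; apply: (mLT_max Hle).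
Qed.

Lemma mLC_neq0 (f : P) : f != 0 -> mLC le f != 0.
Proof. by move=> f0; rewrite /mLC -mcoeff_msupp; apply: (mLT_in Hle). Qed.

End Aux3.

Section PartB.
Context (K : fieldType) (n s : nat) (I : {mpoly K[n]} -> Prop)
    (z : 'I_s -> 'I_n) (le : rel 'X_{1..n}).
Hypothesis Hle : term_order le.
Hypothesis HI : is_ideal I.
Hypothesis HM : forall f, I f -> in_M f.
Hypothesis Hz : injective z.
Local Notation P := {mpoly K[n]}.

Lemma idt (X h f : P) (c : K) : X - h = c *: f + ((X - c *: f) - h).
Proof. by rewrite addrA addrCA subrr addr0. Qed.
Lemma idt2 (t h : P) : h = t - (t - h).
Proof. by rewrite opprB addrC subrK. Qed.

Lemma indetsZ (j : 'I_n) (c : K) (f : P) : ~~ in_indets j f -> ~~ in_indets j (c *: f).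
Proof.
by move=> H; apply/hasPn => m /msuppZ_le Hm; move/hasPn: H => /(_ m Hm).
Qed.

Variables (f : 'I_s -> P) (gs : seq P).
Hypothesis Hdata : Z_separating_GB_data le I z f gs.
Variable h : 'I_s -> P.
Hypothesis HNF : forall i, is_NF le (Ihat I z) (tail (z i) (f i)) (h i).

Lemma fLT i : mLT le (f i) = U_(z i)%MM.
Proof. by case: Hdata. Qed.

Lemma f_neq0 i : f i != 0.
Proof. by case: Hdata => C _ _ _; case: (C i). Qed.

Lemma tail_P i : in_Phat z (tail (z i) (f i)).
Proof.
case: Hdata => C _ _ _ k; have [_ [_ _ _ Hs] _] := C i.
case: (eqVneq k i) => [->|ki] //.
rewrite /tail; apply: indets_sub; first by apply: indets_X; rewrite (inj_eq Hz) eq_sym.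
by apply: indetsZ; have [_ _ H] := C k; apply: H; rewrite eq_sym.
Qed.

Lemma h_P i : in_Phat z (h i).
Proof.
move=> k; rewrite (idt2 (tail (z i) (f i)) (h i)); apply: indets_sub.
  exact: tail_P.
by have [[_ H] _] := HNF i; apply: H.
Qed.

Lemma tail_bound i m : m \in msupp (tail (z i) (f i)) -> le m U_(z i)%MM.
Proof.
move/msuppB_le; rewrite mem_cat => /orP [].
  by rewrite msuppX mem_seq1 => /eqP ->; apply: (tle_refl Hle).
by move/msuppZ_le => Hm; rewrite -fLT; apply: (mLT_max Hle).
Qed.

Lemma h_bound i m : m \in msupp (h i) -> le m U_(z i)%MM.
Proof. by apply: (NF_bound Hle (HNF i)); apply: tail_bound. Qed.

Lemma XhLT i : mLT le ('X_(z i) - h i) = U_(z i)%MM /\ mLC le ('X_(z i) - h i) = 1.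
Proof. by apply: (LT_Xsub Hle); [apply: h_P | apply: h_bound]. Qed.

Lemma inZGB i : (mLC le (f i))^-1 *: f i \in ZGB_seq le f gs.
Proof. by rewrite mem_cat; apply/orP; left; apply/mapP; exists i; rewrite ?mem_enum. Qed.

Lemma mLCf i : mLC le (f i) = (f i)@_U_(z i).
Proof. by rewrite /mLC fLT. Qed.

Lemma Xh_I i : I ('X_(z i) - h i).
Proof.
case: HI => _ HD _.
rewrite (idt _ _ (f i) (mLC le (f i))^-1); apply: HD.
  by case: Hdata => _ _ _ [H _]; have [] := H _ (inZGB i).
by have [[H _] _] := HNF i; rewrite /tail -mLCf in H.
Qed.

Lemma Xh_neq0 i : 'X_(z i) - h i != 0.
Proof.
apply/eqP => E; have [_ H] := XhLT i; move: H; rewrite E /mLC mcoeff0 => /eqP.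
by rewrite eq_sym oner_eq0.
Qed.

Lemma partB : is_reduced_GB le I ([seq 'X_(z i) - h i | i <- enum 'I_s] ++ gs).
Proof.
case: Hdata => C HLT [[Hgs1 Hgs2] Hgs3 Hgs4] [HG1 HG2].
split.
- split.
    move=> g; rewrite mem_cat => /orP [/mapP [i _ ->]|Hg].
      by split; [apply: Xh_I | apply: Xh_neq0].
    by have [[H _] H2] := Hgs1 g Hg.
  move=> p Hp p0; have [g Hg Hd] := HG2 p Hp p0.
  move: Hg; rewrite mem_cat => /orP [/mapP [i _ Eg]|Hg].
    exists ('X_(z i) - h i); first by rewrite mem_cat; apply/orP; left; apply/mapP; exists i; rewrite ?mem_enum.
    have [-> _] := XhLT i; move: Hd; rewrite Eg (mLTZ Hle) ?fLT //.
    by rewrite invr_eq0; apply: (mLC_neq0 Hle); apply: f_neq0.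
  by exists g => //; rewrite mem_cat Hg orbT.
- move=> g; rewrite mem_cat => /orP [/mapP [i _ ->]|Hg]; last exact: Hgs3.
  by have [_ ->] := XhLT i.
move=> g g'; rewrite !mem_cat => /orP [/mapP [i _ ->]|Hg] /orP [/mapP [j _ ->]|Hg'] gg' m Hm.
- have [-> _] := XhLT j.
  move/msuppB_le: Hm; rewrite mem_cat => /orP [].
    rewrite msuppX mem_seq1 => /eqP ->; apply/negP => /mnm_lepP /(_ (z j)); rewrite !mnm1E eqxx.
    case: eqP => // E _.
    by move: gg'; rewrite (Hz E) eqxx.
  by apply: Nindets_term; apply: h_P.
- move/msuppB_le: Hm; rewrite mem_cat => /orP [].
    rewrite msuppX mem_seq1 => /eqP ->; apply/negP => Hd.
    have [[HIg' HPg'] g'0] := Hgs1 g' Hg'.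
    have HL := mLT_in Hle g'0.
    case: (divU Hd) => E.
      by move: HL; rewrite E mcoeff_msupp inM0 ?eqxx //; apply: HM.
    by move/negP: (HPg' i); apply; apply: (indets_term HL); rewrite E lepm_refl.
  move=> Hm; apply/negP => Hd; have [_ HN] := HNF i.
  apply: (HN m Hm); exists g'; split => //.
    by have [[] ] := Hgs1 g' Hg'.
  by have [] := Hgs1 g' Hg'.
- have [-> _] := XhLT j.
  have [[_ HPg] _] := Hgs1 g Hg.
  exact: Nindets_term (HPg j) Hm.
- exact: (Hgs4 g g' Hg Hg' gg' m Hm).
Qed.

End PartB.

Section PartA.
Context (K : fieldType) (n s : nat) (I : {mpoly K[n]} -> Prop)
    (z : 'I_s -> 'I_n) (le : rel 'X_{1..n}).
Hypothesis Hle : term_order le.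
Hypothesis HM : forall f, I f -> in_M f.
Hypothesis Hz : injective z.
Hypothesis Hord : Z_separating_order le I z.
Local Notation P := {mpoly K[n]}.

Lemma Lin_coef (g : P) m0 : mdeg m0 = 1%N -> (Lin g)@_m0 = g@_m0.
Proof.
move=> Hd; rewrite /Lin raddf_sum /= big_mkcond /= [in RHS](mpolyE g) raddf_sum /=.
apply: eq_bigr => m _; rewrite !mcoeffZ !mcoeffX.
case: (eqVneq m m0) => [->|ne]; first by rewrite Hd eqxx.
by case: ifP => _; rewrite ?mulr0.
Qed.

Lemma isGB_eq (J : P -> Prop) (G1 G2 : seq P) :
  G1 =i G2 -> is_GB le J G1 -> is_GB le J G2.
Proof.
move=> E [H1 H2]; split; first by move=> g; rewrite -E; apply: H1.
by move=> f Jf f0; have [g Hg Hd] := H2 f Jf f0; exists g; rewrite -?E.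
Qed.

Variable G : seq P.
Hypothesis HG : is_reduced_GB le I G.

Lemma exG i : exists2 g, g \in G & mLT le g = U_(z i)%MM.
Proof.
case: Hord => f0 [HI0 HLT0 C0].
have f00 : f0 i != 0 by case: (C0 i).
case: HG => [[HG1 HG2] _ _].
have [g Hg Hd] := HG2 _ (HI0 i) f00.
exists g => //; move: Hd; rewrite HLT0 => /divU [E|//].
have [Ig g0] := HG1 g Hg.
by have := mLT_in Hle g0; rewrite E mcoeff_msupp inM0 ?eqxx //; apply: HM.
Qed.

Definition gi i := nth 0 G (find (fun g => mLT le g == U_(z i)%MM) G).

Lemma gi_in i : gi i \in G /\ mLT le (gi i) = U_(z i)%MM.
Proof.
have Hh : has (fun g => mLT le g == U_(z i)%MM) G.
  by have [g Hg E] := exG i; apply/hasP; exists g => //; rewrite E.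
split; first by apply: mem_nth; rewrite -has_find.
by apply/eqP; apply: (nth_find 0 Hh).
Qed.

Lemma gi_LC i : mLC le (gi i) = 1.
Proof. by case: HG => _ H _; apply: H; case: (gi_in i). Qed.

Lemma gi_coef i : (gi i)@_U_(z i) = 1.
Proof. by have := gi_LC i; rewrite /mLC; case: (gi_in i) => _ ->. Qed.

Lemma gi_neq0 i : gi i != 0.
Proof. by case: HG => [[H _] _ _]; case: (gi_in i) => Hg _; case: (H _ Hg). Qed.

Lemma E5 g i m : g \in G -> m \in msupp g -> (U_(z i) <= m)%MM -> g = gi i.
Proof.
move=> Hg Hm Hd; case: (eqVneq g (gi i)) => // ne; exfalso.
case: HG => _ _ H; case: (gi_in i) => Hgi HL.
have := H g (gi i) Hg Hgi; rewrite eq_sym => /(_ ne m Hm); by rewrite HL Hd.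
Qed.

Lemma E6 i m : m \in msupp (gi i) -> (U_(z i) <= m)%MM -> m = U_(z i)%MM.
Proof.
move=> Hm Hd; apply: (tle_anti Hle); last exact: (tle_div Hle).
by case: (gi_in i) => _ <-; apply: (mLT_max Hle).
Qed.

Lemma gi_sep i : z_separating (z i) (gi i).
Proof.
have HU : (Lin (gi i))@_U_(z i) = 1 by rewrite Lin_coef ?mdeg1 // gi_coef.
have HUm : U_(z i)%MM \in msupp (Lin (gi i)) by rewrite mcoeff_msupp HU oner_neq0.
split.
- apply: HM; case: HG => [[H _] _ _]; case: (gi_in i) => Hg _; by case: (H _ Hg).
- by apply/eqP => E; move: HU; rewrite E mcoeff0 => /eqP; rewrite eq_sym oner_eq0.
- by apply: (indets_term HUm); rewrite lepm_refl.
apply/hasPn => m Hm; rewrite lt0n -lep1mP; apply/negP => Hd.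
move: Hm; rewrite /tail gi_coef invr1 scale1r mcoeff_msupp mcoeffB.
case: (eqVneq m U_(z i)%MM) => [->|ne].
  by rewrite mcoeffXU eqxx gi_coef subrr eqxx.
have -> : (gi i)@_m = 0.
  apply: memN_msupp_eq0; apply/negP => Hm; exact: (negP ne) (introT eqP (E6 Hm Hd)).
rewrite subr0 (memN_msupp_eq0 (m := m)) ?eqxx // ?msuppX ?mem_seq1.
exact: ne.
Qed.

Lemma gi_coh : coh_Z_separating z gi.
Proof.
move=> i; split; [exact: gi_neq0 | exact: gi_sep |].
move=> j ji; apply/hasPn => m Hm; rewrite lt0n -lep1mP; apply/negP => Hd.
have Hgj : gi j \in G by case: (gi_in j).
have E := E5 Hgj Hm Hd.
have : mLT le (gi j) = mLT le (gi i) by rewrite E.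
case: (gi_in i) => _ ->; case: (gi_in j) => _ -> /eqP.
by rewrite eq_mnm1 (inj_eq Hz) (negbTE ji).
Qed.

Definition Pb (g : P) := [forall k, ~~ in_indets (z k) g].
Definition gsA := filter Pb G.

Lemma notPb g : ~~ Pb g -> exists k m, m \in msupp g /\ (U_(z k) <= m)%MM.
Proof.
rewrite negb_forall => /existsP [k]; rewrite negbK => /hasP [m Hm Hmk].
by exists k, m; split => //; rewrite lep1mP -lt0n.
Qed.

Lemma G_eq : G =i ZGB_seq le gi gsA.
Proof.
move=> x; rewrite /ZGB_seq mem_cat mem_filter.
have -> : [seq (mLC le (gi i))^-1 *: gi i | i <- enum 'I_s] = [seq gi i | i <- enum 'I_s].
  by apply: eq_map => i; rewrite gi_LC invr1 scale1r.
apply/idP/idP.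
  move=> Hx; case: (boolP (Pb x)) => Hp; first by rewrite Hx orbT.
  have [k [m [Hm Hd]]] := notPb Hp.
  by rewrite (E5 Hx Hm Hd); apply/orP; left; apply/mapP; exists k; rewrite ?mem_enum.
by case/orP => [/mapP [i _ ->]|/andP [_ //]]; case: (gi_in i).
Qed.

Lemma gsA_red : is_reduced_GB le (Ihat I z) gsA.
Proof.
case: HG => [[HG1 HG2] HG3 HG4].
split.
- split.
    move=> g; rewrite mem_filter => /andP [Hp Hg].
    have [Ig g0] := HG1 g Hg; split => //; split => // k.
    by move/forallP: Hp.
  move=> f [If Pf] f0; have [g Hg Hd] := HG2 f If f0.
  exists g => //; rewrite mem_filter Hg andbT.
  apply/negP => /negP Hp; have [k [m [Hm Hdk]]] := notPb Hp.
  have E := E5 Hg Hm Hdk.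
  move: Hd; rewrite E; case: (gi_in k) => _ -> Hdf.
  by move/negP: (Pf k); apply; apply: (indets_term (mLT_in Hle f0)).
- by move=> g; rewrite mem_filter => /andP [_ Hg]; apply: HG3.
move=> g g'; rewrite !mem_filter => /andP [_ Hg] /andP [_ Hg'].
exact: HG4.
Qed.

Lemma partA : Z_separating_GB le I z G.
Proof.
exists gi, gsA; split; last exact: G_eq.
split.
- exact: gi_coh.
- by move=> i; case: (gi_in i).
- exact: gsA_red.
case: HG => HGB _ _; exact: isGB_eq G_eq HGB.
Qed.

End PartA.

Unset Implicit Arguments.

Theorem proposition2p12 (K : fieldType) (n s : nat) (I : {mpoly K[n]} -> Prop)
    (z : 'I_s -> 'I_n) (le : rel 'X_{1..n}) :
  is_ideal I -> (forall f, I f -> in_M f) ->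
  (0 < s)%N -> injective z ->
  term_order le -> Z_separating_order le I z ->
  (forall G, is_reduced_GB le I G -> Z_separating_GB le I z G) /\
  (forall (f : 'I_s -> {mpoly K[n]}) (gs : seq {mpoly K[n]}),
     Z_separating_GB_data le I z f gs ->
     forall h : 'I_s -> {mpoly K[n]},
       (forall i, is_NF le (Ihat I z) (tail (z i) (f i)) (h i)) ->
       is_reduced_GB le I ([seq 'X_(z i) - h i | i <- enum 'I_s] ++ gs)).
Proof.
move=> HI HM _ Hz Hle Hord; split.
  by move=> G HG; exact: (partA Hle HM Hz Hord HG).
by move=> f gs Hd h HNF; exact: (partB Hle HI HM Hz Hd HNF).
Qed.
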